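(* For each $k\in\mathbb{Z}$, the set of standard monomials $\{z_k[a_1,a_2]\}_{a_1,a_2\in\mathbb{Z}}$, where $z_k[a_1,a_2]=x_{k-1}^{[a_2]_+}x_k^{[-a_1]_+}x_{k+1}^{[-a_2]_+}x_{k+2}^{[a_1]_+}$, is a $\underline\Bbbk$-basis of $\mathcal{A}(P_1,P_2)$.
   Context: $[a]_+=\max(a,0)$. $\Bbbk$ is a field of characteristic zero and $P_1,P_2\in\Bbbk[z]$ are monic palindromic polynomials (palindromic: $P(z)=z^dP(z^{-1})$ for $d=\deg P$). With $x_1,x_2$ commuting indeterminates, define $x_k\in\Bbbk(x_1,x_2)$ for all $k\in\mathbb{Z}$ by $x_{k+1}x_{k-1}=P_1(x_k)$ if $k$ is even and $x_{k+1}x_{k-1}=P_2(x_k)$ if $k$ is odd. $\underline\Bbbk$ is the $\mathbb{Z}$-subalgebra of $\Bbbk$ generated by the coefficients of $P_1,P_2$, and $\mathcal{A}(P_1,P_2)$ is the $\underline\Bbbk$-subalgebra of $\Bbbk(x_1,x_2)$ generated by all $x_k$. *)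

(* Defs.v *)
From HB Require Import structures.
From mathcomp Require Import all_boot all_order all_algebra.
Set Implicit Arguments. Unset Strict Implicit. Unset Printing Implicit Defensive.
Import Order.TTheory GRing.Theory Num.Theory.
Local Open Scope ring_scope.

Definition posp (a : int) : nat := if a is Posz n then n else 0%N.

Section GenCluster.
Variable k : fieldType.

(* k(z) = Frac(k[z]) ; used to state palindromicity literally. *)
Definition kz := {fraction {poly k}}.
Definition toKz (c : k) : kz := FracField.tofrac (c%:P).

Definition palindromic (P : {poly k}) : Prop :=
  let z : kz := FracField.tofrac ('X : {poly k}) in
  (map_poly toKz P).[z] = z ^+ (size P).-1 * (map_poly toKz P).[z^-1].

(* k(x1,x2) = Frac(k[x1][x2]); x1 = constant polynomial 'X, x2 = 'X. *)
Definition K2 := {fraction {poly {poly k}}}.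
Definition embK (c : k) : K2 := FracField.tofrac ((c%:P)%:P).
Definition X1 : K2 := FracField.tofrac (('X : {poly k})%:P).
Definition X2 : K2 := FracField.tofrac ('X : {poly {poly k}}).

Variables P1 P2 : {poly k}.

(* the exchange polynomial used in x_{j+1} x_{j-1} = P(x_j):
   P1 if j even, P2 if j odd *)
Definition Pat (j : nat) : {poly k} := if odd j then P2 else P1.
Definition evalK (P : {poly k}) (y : K2) : K2 := (map_poly embK P).[y].

(* fwd n = (x_{n+1}, x_{n+2}) *)
Fixpoint fwd (n : nat) : K2 * K2 :=
  match n with
  | 0 => (X1, X2)
  | m.+1 => let: (a, b) := fwd m in (b, evalK (Pat m.+2) b / a)
  end.

(* bwd n = (x_{1-n}, x_{2-n}) *)
Fixpoint bwd (n : nat) : K2 * K2 :=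
  match n with
  | 0 => (X1, X2)
  | m.+1 => let: (a, b) := bwd m in (evalK (Pat m.+1) a / b, a)
  end.

Definition xk (j : int) : K2 :=
  match j with
  | Posz 0 => (bwd 1).1
  | Posz n.+1 => (fwd n).1
  | Negz m => (bwd m.+2).1
  end.

Inductive gen_ring (R : ringType) (G : R -> Prop) : R -> Prop :=
  | gen_base x : G x -> gen_ring G x
  | gen_one : gen_ring G 1
  | gen_add x y : gen_ring G x -> gen_ring G y -> gen_ring G (x + y)
  | gen_opp x : gen_ring G x -> gen_ring G (- x)
  | gen_mul x y : gen_ring G x -> gen_ring G y -> gen_ring G (x * y).

Definition kbar : k -> Prop :=
  gen_ring (fun c => exists i, c = P1`_i \/ c = P2`_i).

(* A(P1,P2): kbar-subalgebra of k(x1,x2) generated by all x_j, i.e. the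
   subring generated by the image of kbar together with all x_j *)
Definition Aclu : K2 -> Prop :=
  gen_ring (fun f => (exists c, kbar c /\ f = embK c) \/ (exists j, f = xk j)).

Definition zmon (j : int) (a : int * int) : K2 :=
  xk (j - 1) ^+ posp a.2 * xk j ^+ posp (- a.1)
  * xk (j + 1) ^+ posp (- a.2) * xk (j + 2) ^+ posp a.1.

End GenCluster.

Definition is_basis (k : fieldType) (V : ringType) (emb : k -> V)
  (D : k -> Prop) (A : V -> Prop) (I : eqType) (b : I -> V) : Prop :=
  [/\ forall i, A (b i),
      forall f, A f -> exists (S : seq I) (c : I -> k),
          (forall i, D (c i)) /\ f = \sum_(i <- S) emb (c i) * b i
    & forall (S : seq I) (c : I -> k), uniq S -> (forall i, i \in S -> D (c i)) ->
          \sum_(i <- S) emb (c i) * b i = 0 -> forall i, i \in S -> c i = 0].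

(* Main.v *)
Require Import Defs.
From HB Require Import structures.
From mathcomp Require Import all_boot all_order all_algebra ring zify.
Set Implicit Arguments. Unset Strict Implicit. Unset Printing Implicit Defensive.
Import GRing.Theory.
Local Open Scope ring_scope.

Section S.
Variable k : fieldType.
Local Notation K2 := (K2 k).
Implicit Types (p q : {poly k}) (y : K2).

Lemma embK_is_zmod : zmod_morphism (@embK k).
Proof. by move=> a b; rewrite /embK !rmorphB. Qed.
HB.instance Definition _ := GRing.isZmodMorphism.Build k K2 (@embK k) embK_is_zmod.
Lemma embK_is_monoid : monoid_morphism (@embK k).
Proof. by split; [rewrite /embK !rmorph1 | move=> a b; rewrite /embK !rmorphM]. Qed.
HB.instance Definition _ := GRing.isMonoidMorphism.Build k K2 (@embK k) embK_is_monoid.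

Lemma evalK_D p q y : evalK (p + q) y = evalK p y + evalK q y.
Proof. by rewrite /evalK rmorphD hornerD. Qed.
Lemma evalK_M p q y : evalK (p * q) y = evalK p y * evalK q y.
Proof. by rewrite /evalK rmorphM hornerM. Qed.
Lemma evalK_X y : evalK 'X y = y.
Proof. by rewrite /evalK map_polyX hornerX. Qed.
Lemma evalK_C c y : evalK c%:P y = embK c.
Proof. by rewrite /evalK map_polyC hornerC. Qed.
Lemma evalK_exp p n y : evalK (p ^+ n) y = evalK p y ^+ n.
Proof. by rewrite /evalK rmorphXn horner_exp. Qed.
Lemma evalK_sum p y : evalK p y = \sum_(i < size p) embK p`_i * y ^+ i.
Proof.
rewrite /evalK horner_coef size_map_poly.
by apply: eq_bigr => i _; rewrite coef_map.
Qed.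

Lemma toKz_is_zmod : zmod_morphism (@toKz k).
Proof. by move=> a b; rewrite /toKz !rmorphB. Qed.
HB.instance Definition _ := GRing.isZmodMorphism.Build k (kz k) (@toKz k) toKz_is_zmod.
Lemma toKz_is_monoid : monoid_morphism (@toKz k).
Proof. by split; [rewrite /toKz !rmorph1 | move=> a b; rewrite /toKz !rmorphM]. Qed.
HB.instance Definition _ := GRing.isMonoidMorphism.Build k (kz k) (@toKz k) toKz_is_monoid.

Lemma pal_coef p : palindromic p ->
  forall i, (i < size p)%N -> p`_i = p`_((size p).-1 - i).
Proof.
rewrite /palindromic; set z : kz k := FracField.tofrac 'X.
set n := size p; set e := n.-1.
have z0 : z != 0 by rewrite tofrac_eq0 polyX_eq0.
rewrite !horner_coef size_map_poly.
have E1 : \sum_(i < size p) (map_poly (@toKz k) p)`_i * z ^+ i = FracField.tofrac p.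
  have E : p = \sum_(i < size p) ((p`_i)%:P * 'X^i).
    by rewrite -[LHS]coefK poly_def; apply: eq_bigr => i _; rewrite mul_polyC.
  rewrite [in RHS]E rmorph_sum; apply: eq_bigr => i _.
  by rewrite coef_map rmorphM rmorphXn.
have E2 : z ^+ e * \sum_(i < size p) (map_poly (@toKz k) p)`_i * z^-1 ^+ i =
    FracField.tofrac (\sum_(i < n) ((p`_i)%:P * 'X^(e - i))).
  rewrite mulr_sumr rmorph_sum; apply: eq_bigr => i _.
  rewrite coef_map rmorphM rmorphXn /= -/z.
  have ie : (i <= e)%N by rewrite /e /n -ltnS (ltn_predK (ltn_ord i)).
  rewrite exprVn mulrCA; congr (_ * _).
  rewrite -[in z ^+ e](subnK ie) exprD -mulrA.
  by rewrite (@mulfV _ (z ^+ i) (expf_neq0 i z0)) mulr1.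
rewrite E1 E2 => /eqP; rewrite tofrac_eq => /eqP E i ilt.
have := congr1 (fun q => q`_(e - i)) E => /= ->.
rewrite coef_sum (bigD1 (Ordinal ilt)) //= coefCM coefXn eqxx mulr1.
rewrite big1 ?addr0 // => l /eqP lneq; rewrite coefCM coefXn.
have -> : (e - i == e - l)%N = false.
  apply/eqP => E'; apply: lneq; apply: val_inj => /=.
  have := ltn_ord l; rewrite /e /n in E' *; lia.
by rewrite mulr0.
Qed.

Lemma monic_pal0 p : p \is monic -> palindromic p -> p`_0 = 1.
Proof.
move=> mp pp; have sz : (0 < size p)%N by rewrite size_poly_gt0 monic_neq0.
rewrite (pal_coef pp sz) subn0; exact: (eqP mp).
Qed.

Lemma geom (R : comRingType) (z : R) i : (z - 1) * \sum_(l < i) z ^+ l = z ^+ i - 1.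
Proof.
elim: i => [|i IH]; first by rewrite big_ord0 mulr0 expr0 subrr.
by rewrite big_ord_recr /= mulrDr IH exprS; ring.
Qed.

Section GR.
Variable R : comRingType.
Variable G : R -> Prop.
Local Notation L := (gen_ring G).
Lemma gr0 : L 0.
Proof. by rewrite -(subrr 1); apply: gen_add; [apply: gen_one | apply: gen_opp; apply: gen_one]. Qed.
Lemma grB u v : L u -> L v -> L (u - v).
Proof. by move=> Hu Hv; apply: gen_add => //; apply: gen_opp. Qed.
Lemma grX u n : L u -> L (u ^+ n).
Proof.
move=> Hu; elim: n => [|n IH]; first by rewrite expr0; apply: gen_one.
by rewrite exprS; apply: gen_mul.
Qed.
Lemma gr_sum (I : Type) (r : seq I) (P : pred I) (F : I -> R) :
  (forall i, P i -> L (F i)) -> L (\sum_(i <- r | P i) F i).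
Proof.
move=> HF; apply: (big_ind L) => //; [exact: gr0 | move=> ? ? ? ?; exact: gen_add].
Qed.
End GR.

Definition ev (u v : K2) (G : {poly {poly k}}) : K2 :=
  (map_poly (map_poly (@embK k)) G).[u%:P].[v].

Lemma evD u v G H : ev u v (G + H) = ev u v G + ev u v H.
Proof. by rewrite /ev rmorphD !hornerD. Qed.
Lemma evM u v G H : ev u v (G * H) = ev u v G * ev u v H.
Proof. by rewrite /ev rmorphM !hornerM. Qed.
Lemma ev_sum u v (I : Type) (r : seq I) (F : I -> {poly {poly k}}) :
  ev u v (\sum_(i <- r) F i) = \sum_(i <- r) ev u v (F i).
Proof.
elim: r => [|x r IH]; first by rewrite !big_nil /ev rmorph0 !horner0.
by rewrite !big_cons evD IH.
Qed.
Lemma ev_polyC u v p : ev u v p%:P = evalK p v.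
Proof. by rewrite /ev map_polyC hornerC. Qed.
Lemma ev_mapC u v p : ev u v (map_poly polyC p) = evalK p u.
Proof.
rewrite /ev.
have -> : map_poly (map_poly (@embK k)) (map_poly polyC p) = map_poly polyC (map_poly (@embK k) p).
  by rewrite -!map_poly_comp; apply: eq_map_poly => x /=; rewrite map_polyC.
by rewrite horner_map /= hornerC.
Qed.
Lemma ev_X u v : ev u v 'X = u.
Proof. by rewrite /ev map_polyX hornerX hornerC. Qed.
Lemma ev_exp u v G n : ev u v (G ^+ n) = ev u v G ^+ n.
Proof. by elim: n => [|n IH]; rewrite ?expr0 ?exprS ?evM ?IH // /ev rmorph1 !hornerC. Qed.
Lemma ev_expand u v G : ev u v G = \sum_(i < size G) evalK G`_i v * u ^+ i.
Proof.
rewrite -{1}(coefK G) poly_def ev_sum.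
by apply: eq_bigr => i _; rewrite -mul_polyC evM ev_polyC ev_exp ev_X.
Qed.

Definition indep (u v : K2) := forall G, ev u v G = 0 -> G = 0.

Lemma indep_swap u v : indep u v -> indep v u.
Proof.
move=> H G HG; apply/eqP; rewrite -swapXY_eq0; apply/eqP; apply: H.
by rewrite /ev -swapXY_map horner2_swapXY.
Qed.

Lemma indep_neq0 u v : indep u v -> u != 0.
Proof.
move=> H; apply/eqP=> u0.
have := H 'X; rewrite ev_X u0 => /(_ erefl) /eqP; by rewrite polyX_eq0.
Qed.

Lemma poly_eq0_coef (G : {poly {poly k}}) :
  (forall i, (i < size G)%N -> G`_i = 0) -> G = 0.
Proof.
move=> Gi; apply/polyP => i; rewrite coef0.
by case: (ltnP i (size G)) => [/Gi //| /(nth_default 0) ->].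
Qed.

Lemma indep_step u v Q : Q != 0 -> indep u v -> indep v (evalK Q v / u).
Proof.
move=> Q0 Iuv; apply: indep_swap => G HG.
have u0 := indep_neq0 Iuv.
set w := evalK Q v / u in HG.
pose N := size G.
pose H := \sum_(i < N) ((G`_i * Q ^+ i)%:P * 'X^(N - i)).
have HH : H = 0.
  apply: Iuv.
  have -> : ev u v H = ev w v G * u ^+ N.
    rewrite (ev_expand w v G) mulr_suml /H ev_sum; apply: eq_bigr => i _.
    rewrite evM ev_polyC ev_exp ev_X evalK_M evalK_exp.
    have iN : (i <= N)%N by apply: ltnW.
    have -> : u ^+ N = u ^+ i * u ^+ (N - i) by rewrite -exprD subnKC.
    have -> : evalK Q v = w * u by rewrite /w divfK.
    by rewrite exprMn; ring.
  by rewrite HG mul0r.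
have Gi : forall i, (i < N)%N -> G`_i = 0.
  move=> i iN.
  have : H`_(N - i) = G`_i * Q ^+ i.
    rewrite /H coef_sum (bigD1 (Ordinal iN)) //= coefCM coefXn eqxx mulr1.
    rewrite big1 ?addr0 // => l /eqP lneq; rewrite coefCM coefXn.
    have -> : (N - i == N - l)%N = false.
      apply/eqP => E; apply: lneq; apply: val_inj => /=.
      have := ltn_ord l; lia.
    by rewrite mulr0.
  rewrite HH coef0 => /esym /eqP; rewrite mulf_eq0 expf_eq0 (negPf Q0) andbF orbF.
  by move/eqP.
exact: poly_eq0_coef.
Qed.

Lemma evalK_X1 p : evalK p (X1 k) = FracField.tofrac (p%:P).
Proof.
have E : p = \sum_(i < size p) ((p`_i)%:P * 'X^i).
  by rewrite -[LHS]coefK poly_def; apply: eq_bigr => i _; rewrite mul_polyC.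
rewrite evalK_sum [in RHS]E rmorph_sum /= rmorph_sum /=.
apply: eq_bigr => i _; rewrite !rmorphM !rmorphXn /=.
by rewrite /embK /X1.
Qed.

Lemma ev_base G : ev (X2 k) (X1 k) G = FracField.tofrac G.
Proof.
have E : G = \sum_(i < size G) ((G`_i)%:P * 'X^i).
  by rewrite -[LHS]coefK poly_def; apply: eq_bigr => i _; rewrite mul_polyC.
rewrite ev_expand [in RHS]E rmorph_sum /=.
apply: eq_bigr => i _; rewrite rmorphM rmorphXn /= evalK_X1.
by rewrite /X2.
Qed.

Lemma indep_base : indep (X2 k) (X1 k).
Proof. by move=> G; rewrite ev_base => /eqP; rewrite tofrac_eq0 => /eqP. Qed.

Lemma key (Gg : K2 -> Prop) (a b c d y : K2) (P Q : {poly k}) :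
  (forall i, gen_ring Gg (embK P`_i)) -> (forall i, gen_ring Gg (embK Q`_i)) ->
  gen_ring Gg a -> gen_ring Gg b -> gen_ring Gg c -> gen_ring Gg d ->
  a * c = evalK P b -> b * d = evalK Q c -> c != 0 -> y * c = evalK P d ->
  Q`_0 = 1 -> (0 < size Q)%N ->
  (forall i, (i < size P)%N -> P`_i = P`_((size P).-1 - i)) -> gen_ring Gg y.
Proof.
move=> LP LQ La Lb Lc Ld Hac Hbd c0 Hy Q0 Qsz Ppal.
set n := size P; set e := n.-1.
pose S := \sum_(i < (size Q).-1) embK Q`_(i.+1) * c ^+ i.
pose Gi (i : nat) := \sum_(l < i) (b * d) ^+ l.
pose T := a * d ^+ e - S * \sum_(i < n) embK P`_i * d ^+ (e - i) * Gi i.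
have -> : y = T.
  apply: (mulIf c0).
  have HS : b * d - 1 = c * S.
    rewrite Hbd evalK_sum -(ltn_predK Qsz) big_ord_recl /= Q0 rmorph1 mul1r expr0.
    rewrite addrAC subrr add0r /S mulr_sumr; apply: eq_bigr => i _.
    by rewrite exprS; ring.
  have -> : T * c = \sum_(i < n) embK P`_i * d ^+ (e - i).
    rewrite /T.
    set Sig := \sum_(i < n) _.
    have -> : (a * d ^+ e - S * Sig) * c = (a * c) * d ^+ e - (c * S) * Sig by ring.
    rewrite Hac -HS /Sig.
    rewrite mulr_sumr evalK_sum mulr_suml -sumrB; apply: eq_bigr => i _.
    have -> : (b * d - 1) * (embK P`_i * d ^+ (e - i) * Gi i) =
       embK P`_i * d ^+ (e - i) * ((b * d - 1) * Gi i) by ring.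
    rewrite /Gi geom.
    have ie : (i <= e)%N by rewrite /e /n -ltnS (ltn_predK (ltn_ord i)).
    have -> : d ^+ e = d ^+ (e - i) * d ^+ i by rewrite -exprD subnK.
    rewrite exprMn; ring.
  rewrite Hy evalK_sum -/n (reindex_inj rev_ord_inj) /=.
  apply: eq_bigr => i _.
  have ie : (i <= e)%N by rewrite /e /n -ltnS (ltn_predK (ltn_ord i)).
  have -> : (n - i.+1 = e - i)%N by rewrite /e; have := ltn_ord i; lia.
  congr (embK _ * _); rewrite Ppal; last by rewrite /n; have := ltn_ord i; lia.
  rewrite -/n -/e; have -> : (e - (e - i) = i)%N by lia.
  by [].
apply: grB; first by apply: gen_mul => //; apply: grX.
apply: gen_mul.
  by apply: gr_sum => i _; apply: gen_mul => //; apply: grX.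
apply: gr_sum => i _; apply: gen_mul; first by apply: gen_mul => //; apply: grX.
by apply: gr_sum => l _; apply: grX; apply: gen_mul.
Qed.

Variables P1 P2 : {poly k}.
Hypotheses (mP1 : P1 \is monic) (mP2 : P2 \is monic).
Local Notation x := (xk P1 P2).
Definition PI (n : int) : {poly k} := if odd (absz n) then P2 else P1.

Lemma PI_neq0 n : PI n != 0.
Proof. by rewrite /PI; case: ifP => _; apply: monic_neq0. Qed.

Lemma Pat_neq0 n : Pat P1 P2 n != 0.
Proof. by rewrite /Pat; case: ifP => _; apply: monic_neq0. Qed.

Lemma PI2 n : PI (n + 2) = PI n.
Proof.
rewrite /PI; case: n => [m|m].
  have -> : absz (m%:Z + 2) = m.+2 by lia.
  by rewrite /= negbK.
case: m => [|[|m]].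
- by [].
- by [].
- have -> : absz (Negz m.+2 + 2) = m.+1 by lia.
  have -> : absz (Negz m.+2) = m.+3 by lia.
  by rewrite /= negbK.
Qed.

Lemma x_fwd (m : nat) :
  x (m.+3)%:Z = evalK (Pat P1 P2 m.+2) (x (m.+2)%:Z) / x (m.+1)%:Z.
Proof. by rewrite /xk /=; case: (fwd P1 P2 m). Qed.

Lemma x_bwd1 (m : nat) : x (1 - m%:Z) = (bwd P1 P2 m).1.
Proof.
case: m => [|[|m]] //.
by have -> : (1 - (m.+2)%:Z) = Negz m by lia.
Qed.

Lemma x_bwd2 (m : nat) : x (2 - m%:Z) = (bwd P1 P2 m).2.
Proof.
case: m => [|m]; first by [].
have -> : (2 - (m.+1)%:Z) = 1 - m%:Z by lia.
by rewrite x_bwd1 /=; case: (bwd P1 P2 m).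
Qed.

Lemma x_bwd (m : nat) :
  x (1 - (m.+1)%:Z) = evalK (Pat P1 P2 m.+1) (x (1 - m%:Z)) / x (2 - m%:Z).
Proof. by rewrite x_bwd1 x_bwd2 x_bwd1 /=; case: (bwd P1 P2 m). Qed.

Lemma indep_fwd (m : nat) : indep (x (m.+1)%:Z) (x (m.+2)%:Z).
Proof.
elim: m => [|m IH]; first exact: (indep_swap (@indep_base)).
by rewrite x_fwd; apply: indep_step => //; apply: Pat_neq0.
Qed.

Lemma indep_bwd (m : nat) : indep (x (1 - m%:Z)) (x (2 - m%:Z)).
Proof.
elim: m => [|m IH]; first exact: (indep_swap (@indep_base)).
have -> : 2 - (m.+1)%:Z = 1 - m%:Z by lia.
apply: indep_swap; rewrite x_bwd.
by apply: indep_step (indep_swap IH); apply: Pat_neq0.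
Qed.

Lemma indep_congr a b a' b' : indep (x a) (x b) -> a = a' -> b = b' -> indep (x a') (x b').
Proof. by move=> H <- <-. Qed.

Lemma indep_all n : indep (x n) (x (n + 1)).
Proof.
case: n => [[|m]|m].
- refine (indep_congr (@indep_bwd 1%N) _ _); lia.
- refine (indep_congr (@indep_fwd m) _ _); lia.
- refine (indep_congr (@indep_bwd m.+2) _ _); lia.
Qed.

Lemma x_neq0 n : x n != 0.
Proof. exact (indep_neq0 (@indep_all n)). Qed.

Lemma x_rel_le (m : nat) :
  x ((1 - m%:Z) + 1) * x ((1 - m%:Z) - 1) = evalK (PI (1 - m%:Z)) (x (1 - m%:Z)).
Proof.
have -> : (1 - m%:Z) + 1 = 2 - m%:Z by lia.
have -> : (1 - m%:Z) - 1 = 1 - (m.+1)%:Z by lia.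
rewrite x_bwd mulrC divfK ?x_neq0 //; congr evalK.
rewrite /PI /Pat; case: m => [|m] //.
have -> : absz (1 - (m.+1)%:Z) = m by lia.
by rewrite /= negbK.
Qed.

Lemma x_rel_ge (m : nat) :
  x ((m.+2)%:Z + 1) * x ((m.+2)%:Z - 1) = evalK (PI (m.+2)%:Z) (x (m.+2)%:Z).
Proof.
have -> : (m.+2)%:Z + 1 = (m.+3)%:Z by lia.
have -> : (m.+2)%:Z - 1 = (m.+1)%:Z by lia.
by rewrite x_fwd divfK ?x_neq0.
Qed.

Lemma x_rel n : x (n + 1) * x (n - 1) = evalK (PI n) (x n).
Proof.
case: n => [[|[|m]]|m].
- have := @x_rel_le 1%N; by have -> : 1 - 1%:Z = 0 by lia.
- have := @x_rel_le 0%N; by have -> : 1 - 0%:Z = 1 by lia.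
- exact: x_rel_ge.
- have := @x_rel_le m.+2; by have -> : 1 - (m.+2)%:Z = Negz m by lia.
Qed.

Hypotheses (pP1 : palindromic P1) (pP2 : palindromic P2).

Lemma PI_monic n : PI n \is monic.
Proof. by rewrite /PI; case: ifP. Qed.
Lemma PI_pal n : palindromic (PI n).
Proof. by rewrite /PI; case: ifP. Qed.
Lemma PI_kbar n i : kbar P1 P2 (PI n)`_i.
Proof. by apply: gen_base; exists i; rewrite /PI; case: ifP => _; [right|left]. Qed.

Lemma xE a b : a = b -> x a = x b.
Proof. by move->. Qed.

Definition Lgen (j : int) (f : K2) :=
  (exists c, kbar P1 P2 c /\ f = embK c) \/
  f = x (j - 1) \/ f = x j \/ f = x (j + 1) \/ f = x (j + 2).
Definition Lj j := gen_ring (Lgen j).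

Lemma Lj_const j c : kbar P1 P2 c -> Lj j (embK c).
Proof. by move=> Hc; apply: gen_base; left; exists c. Qed.
Lemma Lj_a j : Lj j (x (j - 1)). Proof. by apply: gen_base; right; left. Qed.
Lemma Lj_b j : Lj j (x j). Proof. by apply: gen_base; right; right; left. Qed.
Lemma Lj_c j : Lj j (x (j + 1)). Proof. by apply: gen_base; right; right; right; left. Qed.
Lemma Lj_d j : Lj j (x (j + 2)). Proof. by apply: gen_base; right; right; right; right. Qed.

Lemma Lj_up j : Lj j (x (j + 3)).
Proof.
have sz n : (0 < size (PI n))%N by rewrite size_poly_gt0 monic_neq0 ?PI_monic.
apply: (@key _ (x (j - 1)) (x j) (x (j + 1)) (x (j + 2)) _ (PI j) (PI (j + 1))).
- by move=> i; apply: Lj_const; apply: PI_kbar.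
- by move=> i; apply: Lj_const; apply: PI_kbar.
- exact: Lj_a.
- exact: Lj_b.
- exact: Lj_c.
- exact: Lj_d.
- by rewrite mulrC x_rel.
- have E1 : x (j + 2) = x (j + 1 + 1) by apply: xE; lia.
  have E2 : x j = x (j + 1 - 1) by apply: xE; lia.
  by rewrite E1 E2 mulrC x_rel.
- exact: x_neq0.
- have E1 : x (j + 3) = x (j + 2 + 1) by apply: xE; lia.
  have E2 : x (j + 1) = x (j + 2 - 1) by apply: xE; lia.
  by rewrite E1 E2 x_rel PI2.
- exact: monic_pal0 (PI_monic _) (PI_pal _).
- exact: sz.
- exact: pal_coef (PI_pal _).
Qed.

Lemma Lj_down j : Lj j (x (j - 2)).
Proof.
have sz n : (0 < size (PI n))%N by rewrite size_poly_gt0 monic_neq0 ?PI_monic.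
apply: (@key _ (x (j + 2)) (x (j + 1)) (x j) (x (j - 1)) _ (PI (j + 1)) (PI j)).
- by move=> i; apply: Lj_const; apply: PI_kbar.
- by move=> i; apply: Lj_const; apply: PI_kbar.
- exact: Lj_d.
- exact: Lj_c.
- exact: Lj_b.
- exact: Lj_a.
- have E1 : x (j + 2) = x (j + 1 + 1) by apply: xE; lia.
  have E2 : x j = x (j + 1 - 1) by apply: xE; lia.
  by rewrite E1 E2 x_rel.
- by rewrite x_rel.
- exact: x_neq0.
- have E1 : x j = x (j - 1 + 1) by apply: xE; lia.
  have E2 : x (j - 2) = x (j - 1 - 1) by apply: xE; lia.
  have E3 : PI (j + 1) = PI (j - 1) by rewrite -(PI2 (j - 1)); congr PI; lia.
  by rewrite E1 E2 mulrC x_rel E3.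
- exact: monic_pal0 (PI_monic _) (PI_pal _).
- exact: sz.
- exact: pal_coef (PI_pal _).
Qed.

Lemma Lj_incl_up j f : Lj (j + 1) f -> Lj j f.
Proof.
elim=> [g Hg| | ? ? _ ? _ ?| ? _ ?| ? ? _ ? _ ?]; last first.
- exact: gen_mul.
- exact: gen_opp.
- exact: gen_add.
- exact: gen_one.
case: Hg => [[c [Hc ->]]|[->|[->|[->|->]]]].
- exact: Lj_const.
- by rewrite (@xE _ j); [apply: Lj_b | lia].
- exact: Lj_c.
- by rewrite (@xE _ (j + 2)); [apply: Lj_d | lia].
- by rewrite (@xE _ (j + 3)); [apply: Lj_up | lia].
Qed.

Lemma Lj_incl_down j f : Lj (j - 1) f -> Lj j f.
Proof.
elim=> [g Hg| | ? ? _ ? _ ?| ? _ ?| ? ? _ ? _ ?]; last first.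
- exact: gen_mul.
- exact: gen_opp.
- exact: gen_add.
- exact: gen_one.
case: Hg => [[c [Hc ->]]|[->|[->|[->|->]]]].
- exact: Lj_const.
- by rewrite (@xE _ (j - 2)); [apply: Lj_down | lia].
- exact: Lj_a.
- by rewrite (@xE _ j); [apply: Lj_b | lia].
- by rewrite (@xE _ (j + 1)); [apply: Lj_c | lia].
Qed.

Lemma Lj_far j (m : nat) f : (Lj (j + m%:Z) f -> Lj j f) /\ (Lj (j - m%:Z) f -> Lj j f).
Proof.
elim: m f => [|m IH] f.
  have -> : j + 0%:Z = j by lia.
  by [].
split=> H.
- apply: (proj1 (IH f)); apply: Lj_incl_up.
  by have <- : j + (m.+1)%:Z = j + m%:Z + 1 by lia.
- apply: (proj2 (IH f)); apply: Lj_incl_down.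
  by have <- : j - (m.+1)%:Z = j - m%:Z - 1 by lia.
Qed.

Lemma x_in_Lj j n : Lj j (x n).
Proof.
have H := Lj_b n.
case E: (n - j) => [m|m].
- by apply: (proj1 (Lj_far j m _)); have <- : n = j + m%:Z by lia.
- by apply: (proj2 (Lj_far j m.+1 _)); have <- : n = j - (m.+1)%:Z by rewrite NegzE in E; lia.
Qed.

Lemma Aclu_Lj j f : Aclu P1 P2 f -> Lj j f.
Proof.
elim=> [g Hg| | ? ? _ ? _ ?| ? _ ?| ? ? _ ? _ ?]; last first.
- exact: gen_mul.
- exact: gen_opp.
- exact: gen_add.
- exact: gen_one.
case: Hg => [[c [Hc ->]]|[n ->]].
- exact: Lj_const.
- exact: x_in_Lj.
Qed.

Lemma posp_sub (m n : nat) : posp (m%:Z - n%:Z) = (m - n)%N.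
Proof.
case: (leqP n m) => H.
  by have -> : m%:Z - n%:Z = (m - n)%N by lia.
have -> : (m - n = 0)%N by lia.
by have -> : m%:Z - n%:Z = Negz (n - m).-1 by rewrite NegzE; lia.
Qed.

Lemma kbar1 : kbar P1 P2 1. Proof. exact: gen_one. Qed.
Lemma kbarM u v : kbar P1 P2 u -> kbar P1 P2 v -> kbar P1 P2 (u * v).
Proof. exact: gen_mul. Qed.
Lemma kbarD u v : kbar P1 P2 u -> kbar P1 P2 v -> kbar P1 P2 (u + v).
Proof. exact: gen_add. Qed.
Lemma kbarN u : kbar P1 P2 u -> kbar P1 P2 (- u).
Proof. exact: gen_opp. Qed.
Lemma kbar0 : kbar P1 P2 0.
Proof. exact: gr0. Qed.

Section Span.
Variable j : int.
Local Notation z := (zmon P1 P2 j).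
Local Notation a := (x (j - 1)).
Local Notation b := (x j).
Local Notation c := (x (j + 1)).
Local Notation d := (x (j + 2)).

Definition mono (p q r s : nat) := a ^+ p * b ^+ q * c ^+ r * d ^+ s.

Lemma zmonE al : z al = mono (posp al.2) (posp (- al.1)) (posp (- al.2)) (posp al.1).
Proof. by []. Qed.

Lemma monoM (p q r s p' q' r' s' : nat) :
  mono p q r s * mono p' q' r' s' = mono (p + p') (q + q') (r + r') (s + s').
Proof. by rewrite /mono !exprD; ring. Qed.

Definition SpanL (f : K2) := exists l : seq (k * (int * int)),
  (forall t, t \in l -> kbar P1 P2 t.1) /\ f = \sum_(t <- l) embK t.1 * z t.2.

Lemma span0 : SpanL 0.
Proof. by exists [::]; split => //; rewrite big_nil. Qed.

Lemma spanD f g : SpanL f -> SpanL g -> SpanL (f + g).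
Proof.
move=> [l1 [H1 ->]] [l2 [H2 ->]]; exists (l1 ++ l2); split; last by rewrite big_cat.
by move=> t; rewrite mem_cat => /orP [/H1|/H2].
Qed.

Lemma spanZ e f : kbar P1 P2 e -> SpanL f -> SpanL (embK e * f).
Proof.
move=> He [l [Hl ->]]; exists [seq (e * t.1, t.2) | t <- l]; split.
  by move=> t /mapP [u Hu ->] /=; apply: kbarM => //; apply: Hl.
by rewrite big_map mulr_sumr; apply: eq_bigr => t _ /=; rewrite rmorphM mulrA.
Qed.

Lemma span_sum (I : Type) (r : seq I) (P : pred I) (F : I -> K2) :
  (forall i, P i -> SpanL (F i)) -> SpanL (\sum_(i <- r | P i) F i).
Proof. by move=> H; apply: (big_ind SpanL) => //; [exact: span0 | exact: spanD]. Qed.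

Lemma span_z al : SpanL (z al).
Proof.
exists [:: (1, al)]; split; first by move=> t; rewrite inE => /eqP -> /=; apply: kbar1.
by rewrite big_seq1 /= rmorph1 mul1r.
Qed.

Lemma mono_std (p q r s : nat) : (p == 0%N) || (r == 0%N) -> (q == 0%N) || (s == 0%N) ->
  SpanL (mono p q r s).
Proof.
move=> H1 H2.
have -> : mono p q r s = z (s%:Z - q%:Z, p%:Z - r%:Z).
  rewrite zmonE /= !opprB !posp_sub.
  have -> : (p - r = p)%N by case/orP: H1 => /eqP ->; rewrite ?subn0 ?sub0n.
  have -> : (r - p = r)%N by case/orP: H1 => /eqP ->; rewrite ?subn0 ?sub0n.
  have -> : (q - s = q)%N by case/orP: H2 => /eqP ->; rewrite ?subn0 ?sub0n.
  by have -> : (s - q = s)%N by case/orP: H2 => /eqP ->; rewrite ?subn0 ?sub0n.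
exact: span_z.
Qed.

Lemma rel_ac : a * c = evalK (PI j) b.
Proof. by rewrite mulrC x_rel. Qed.

Lemma rel_bd : b * d = evalK (PI (j + 1)) c.
Proof.
have E1 : x (j + 2) = x (j + 1 + 1) by apply: xE; lia.
have E2 : x j = x (j + 1 - 1) by apply: xE; lia.
by rewrite E1 E2 mulrC x_rel.
Qed.

Lemma E_ac (p q r s : nat) :
  mono p.+1 q r.+1 s = \sum_(i < size (PI j)) embK (PI j)`_i * mono p (q + i) r s.
Proof.
have -> : mono p.+1 q r.+1 s = mono p q r s * (a * c) by rewrite /mono !exprS; ring.
rewrite rel_ac evalK_sum mulr_sumr; apply: eq_bigr => i _; rewrite /mono exprD; ring.
Qed.

Lemma E_bd (p q r s : nat) :
  mono p q.+1 r s.+1 = \sum_(i < size (PI (j + 1))) embK (PI (j + 1))`_i * mono p q (r + i) s.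
Proof.
have -> : mono p q.+1 r s.+1 = mono p q r s * (b * d) by rewrite /mono !exprS; ring.
rewrite rel_bd evalK_sum mulr_sumr; apply: eq_bigr => i _; rewrite /mono exprD; ring.
Qed.

Lemma mono_span (N p q r s : nat) : (p + s <= N)%N -> SpanL (mono p q r s).
Proof.
elim: N p q r s => [|N IH] p q r s H.
  have -> : p = 0%N by lia.
  have -> : s = 0%N by lia.
  by apply: mono_std; rewrite eqxx ?orbT.
case Hpr: ((0 < p) && (0 < r))%N.
  case: p H Hpr => [|p] // H; case: r => [|r] // _.
  rewrite E_ac; apply: span_sum => i _; apply: spanZ; first exact: PI_kbar.
  by apply: IH; lia.
case Hqs: ((0 < q) && (0 < s))%N.
  case: q Hqs => [|q] //; case: s H => [|s] // H _.
  rewrite E_bd; apply: span_sum => i _; apply: spanZ; first exact: PI_kbar.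
  by apply: IH; lia.
apply: mono_std.
  by case: p Hpr {H} => [|p]; case: r => [|r].
by case: q Hqs {H} => [|q]; case: s => [|s].
Qed.

Lemma span_mono (p q r s : nat) : SpanL (mono p q r s).
Proof. exact: (@mono_span (p + s)). Qed.

Lemma span_mul f g : SpanL f -> SpanL g -> SpanL (f * g).
Proof.
move=> [l1 [H1 ->]] [l2 [H2 ->]].
rewrite big_seq mulr_suml; apply: span_sum => t t1.
rewrite big_seq mulr_sumr; apply: span_sum => u u2.
have -> : embK t.1 * z t.2 * (embK u.1 * z u.2) = embK (t.1 * u.1) * (z t.2 * z u.2).
  by rewrite rmorphM; ring.
apply: spanZ; first by apply: kbarM; [apply: H1 | apply: H2].
by rewrite !zmonE monoM; apply: span_mono.
Qed.

Lemma z00 : z (0, 0) = 1.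
Proof. by rewrite zmonE /mono /= !expr0 !mulr1. Qed.

Lemma Lj_span f : Lj j f -> SpanL f.
Proof.
elim=> [g Hg| | ? ? _ ? _ ?| ? _ H| ? ? _ ? _ ?]; last first.
- exact: span_mul.
- by rewrite -mulN1r -(rmorph1 (@embK k)) -rmorphN; apply: spanZ => //; apply: kbarN; apply: kbar1.
- exact: spanD.
- by rewrite -z00; apply: span_z.
case: Hg => [[e [He ->]]|[->|[->|[->|->]]]].
- by rewrite -[embK e]mulr1 -z00; apply: spanZ => //; apply: span_z.
- have -> : a = z (0, 1) by rewrite zmonE /mono /= !expr0 ?expr1 ?mulr1 ?mul1r.
  exact: span_z.
- have -> : b = z (-1, 0) by rewrite zmonE /mono /= !expr0 ?expr1 ?mulr1 ?mul1r.
  exact: span_z.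
- have -> : c = z (0, -1) by rewrite zmonE /mono /= !expr0 ?expr1 ?mulr1 ?mul1r.
  exact: span_z.
- have -> : d = z (1, 0) by rewrite zmonE /mono /= !expr0 ?expr1 ?mulr1 ?mul1r.
  exact: span_z.
Qed.

Lemma span_basis (l : seq (k * (int * int))) : (forall t, t \in l -> kbar P1 P2 t.1) ->
  exists (S : seq (int * int)) (cf : int * int -> k), [/\ uniq S, (forall i, kbar P1 P2 (cf i)) &
    \sum_(t <- l) embK t.1 * z t.2 = \sum_(i <- S) embK (cf i) * z i].
Proof.
elim: l => [|[e al] l IH] Hl.
  by exists [::], (fun _ => 0); split => //; [move=> _; apply: kbar0 | rewrite !big_nil].
have [|S [cf [uS kS ES]]] := IH.
  by move=> t tl; apply: Hl; rewrite inE tl orbT.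
have ke : kbar P1 P2 e by have := Hl (e, al); rewrite inE eqxx => /(_ isT).
rewrite big_cons ES /=.
case Hal: (al \in S).
  exists S, (fun i => if i == al then e + cf i else cf i); split => //.
    by move=> i; case: ifP => _; [apply: kbarD | ].
  rewrite (bigD1_seq al Hal uS) [in RHS](bigD1_seq al Hal uS) /= eqxx.
  have -> : \sum_(i <- S | i != al) embK (if i == al then e + cf i else cf i) * z i =
            \sum_(i <- S | i != al) embK (cf i) * z i.
    by apply: eq_bigr => i /negPf ->.
  by rewrite rmorphD; ring.
exists (al :: S), (fun i => if i == al then e else cf i); split.
- by rewrite cons_uniq Hal.
- by move=> i; case: ifP.
rewrite big_cons eqxx; congr (_ + _); apply: eq_big_seq => i iS.
by have -> : (i == al) = false by apply/eqP => E; move: iS; rewrite E Hal.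
Qed.

Lemma posp_diff (al : int) : (posp (- al))%:Z - (posp al)%:Z = - al.
Proof.
case: al => [[|n]|n] //=.
  by rewrite sub0r.
by rewrite subr0.
Qed.

Lemma coefTerm (e : k) (A B : {poly k}) i l :
  ((e%:P%:P * map_poly polyC A * B%:P)`_i)`_l = e * A`_i * B`_l.
Proof. by rewrite coefMC coefCM coef_map /= -polyCM coefCM. Qed.

Lemma coef0X (p : {poly k}) m : (p ^+ m)`_0 = p`_0 ^+ m.
Proof. by elim: m => [|m IH]; rewrite ?expr0 ?coefC // !exprS coef0M IH. Qed.

Lemma leq_sum_mem (S : seq (int * int)) (F : int * int -> nat) al :
  al \in S -> (F al <= \sum_(t <- S) F t)%N.
Proof. by move=> H; rewrite (big_rem al H) /= leq_addr. Qed.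

Definition ppf (al : int * int) := posp al.2.
Definition qqf (al : int * int) := posp (- al.1).
Definition rrf (al : int * int) := posp (- al.2).
Definition ssf (al : int * int) := posp al.1.

Lemma zmonE' al : z al = mono (ppf al) (qqf al) (rrf al) (ssf al).
Proof. by []. Qed.

Lemma indep_z (S : seq (int * int)) (cf : int * int -> k) : uniq S ->
  \sum_(i <- S) embK (cf i) * z i = 0 -> forall i, i \in S -> cf i = 0.
Proof.
move=> uS Hsum.
pose N := (\sum_(t <- S) (ppf t + qqf t + rrf t + ssf t))%N.
have bnd al : al \in S -> [/\ (ppf al <= N)%N, (qqf al <= N)%N, (rrf al <= N)%N & (ssf al <= N)%N].
  move=> H; have := @leq_sum_mem S (fun t => ppf t + qqf t + rrf t + ssf t)%N al H.
  rewrite -/N => HH; split; lia.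
pose E1 al := (N + qqf al - ssf al)%N.
pose E2 al := (N + rrf al - ppf al)%N.
pose P := PI j. pose Q := PI (j + 1).
pose A al := P ^+ ppf al * 'X^(E1 al).
pose B al := Q ^+ ssf al * 'X^(E2 al).
pose G := \sum_(al <- S) ((cf al)%:P%:P * map_poly polyC (A al) * (B al)%:P).
have G0 : G = 0.
  apply: (@indep_all j).
  have -> : ev b c G = (\sum_(i <- S) embK (cf i) * z i) * (b ^+ N * c ^+ N).
    rewrite /G ev_sum mulr_suml big_seq [in RHS]big_seq; apply: eq_bigr => al Hal.
    have [Hp Hq Hr Hs] := bnd al Hal.
    have e1 : (qqf al + N = E1 al + ssf al)%N by rewrite /E1; lia.
    have e2 : (rrf al + N = E2 al + ppf al)%N by rewrite /E2; lia.
    have Hz : z al * (b ^+ N * c ^+ N) =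
        (evalK P b) ^+ ppf al * b ^+ E1 al * ((evalK Q c) ^+ ssf al * c ^+ E2 al).
      rewrite /P /Q -rel_ac -rel_bd zmonE' /mono.
      have -> : a ^+ ppf al * b ^+ qqf al * c ^+ rrf al * d ^+ ssf al * (b ^+ N * c ^+ N)
         = a ^+ ppf al * d ^+ ssf al * b ^+ (qqf al + N) * c ^+ (rrf al + N).
        by rewrite !exprD; ring.
      by rewrite e1 e2 !exprD !exprMn; ring.
    rewrite !evM ev_mapC !ev_polyC /A /B !evalK_M !evalK_exp !evalK_X !evalK_C.
    by rewrite -[RHS]mulrA Hz; ring.
  by rewrite Hsum mul0r.
move=> al0 Hal0; apply/eqP; apply: contraT => Hne.
have ex1 : exists n, has (fun al => (cf al != 0) && (E1 al == n)) S.
  by exists (E1 al0); apply/hasP; exists al0 => //; rewrite Hne eqxx.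
case: (ex_minnP ex1) => i0 /hasP [al1 Hal1 /andP [Hne1 /eqP E1al1]] min1.
have ex2 : exists n, has (fun al => [&& cf al != 0, E1 al == i0 & E2 al == n]) S.
  by exists (E2 al1); apply/hasP; exists al1 => //; rewrite Hne1 E1al1 !eqxx.
case: (ex_minnP ex2) => l0 /hasP [[s1 s2] Hals /and3P [Hnes /eqP E1s /eqP E2s]] min2.
have := congr1 (fun g : {poly {poly k}} => g`_i0`_l0) G0 => /=.
rewrite coef0 coef0 /G coef_sum coef_sum.
rewrite (eq_bigr (fun al => cf al * (A al)`_i0 * (B al)`_l0)); last by move=> al _; rewrite coefTerm.
rewrite (bigD1_seq (s1, s2) Hals uS) /= big1_seq.
  rewrite addr0 /A /B !coefMXn E1s E2s !ltnn !subnn !coef0X.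
  rewrite /P /Q (monic_pal0 (PI_monic j) (PI_pal j)).
  rewrite (monic_pal0 (PI_monic (j + 1)) (PI_pal (j + 1))) !expr1n !mulr1 => E.
  by move: Hnes; rewrite E eqxx.
move=> [a1 a2] /andP [neq Hal].
case: (eqVneq (cf (a1, a2)) 0) => [-> | Hnz]; first by rewrite !mul0r.
have [Hp Hq Hr Hs] := bnd _ Hal; have [Hps Hqs Hrs Hss] := bnd _ Hals.
have m1 : (i0 <= E1 (a1, a2))%N.
  by apply: min1; apply/hasP; exists (a1, a2) => //; rewrite Hnz eqxx.
rewrite /A coefMXn; case: ltnP => h1; first by rewrite mulr0 mul0r.
have e1 : E1 (a1, a2) = i0 by apply/eqP; rewrite eqn_leq h1 m1.
have m2 : (l0 <= E2 (a1, a2))%N.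
  by apply: min2; apply/hasP; exists (a1, a2) => //; rewrite Hnz e1 !eqxx.
rewrite /B coefMXn; case: ltnP => h2; first by rewrite mulr0.
have e2 : E2 (a1, a2) = l0 by apply/eqP; rewrite eqn_leq h2 m2.
exfalso; move: neq; apply/negP; rewrite negbK.
have d1 := posp_diff a1; have d2 := posp_diff a2.
have d3 := posp_diff s1; have d4 := posp_diff s2.
move: e1 e2 E1s E2s Hp Hq Hr Hs Hps Hqs Hrs Hss.
rewrite /E1 /E2 /ppf /qqf /rrf /ssf /= => e1 e2 E1s E2s Hp Hq Hr Hs Hps Hqs Hrs Hss.
have -> : a1 = s1 by lia.
by have -> : a2 = s2 by lia.
Qed.

Lemma main : is_basis (@embK k) (kbar P1 P2) (Aclu P1 P2) (zmon P1 P2 j).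
Proof.
split.
- move=> al; rewrite zmonE' /mono.
  have Hx n : Aclu P1 P2 (x n) by apply: gen_base; right; exists n.
  by apply: gen_mul; [apply: gen_mul; [apply: gen_mul|]|]; apply: grX; apply: Hx.
- move=> f Hf; have [l [Hl ->]] := Lj_span (Aclu_Lj j Hf).
  have [S [cf [_ kS E]]] := span_basis Hl.
  by exists S, cf; split.
- by move=> S cf uS _ H; apply: indep_z.
Qed.

End Span.

End S.

Theorem theorem2p4 (k : fieldType) (chk0 : [pchar k] =i pred0)
  (P1 P2 : {poly k}) (mP1 : P1 \is monic) (mP2 : P2 \is monic)
  (palP1 : palindromic P1) (palP2 : palindromic P2) (j : int) :
  is_basis (@embK k) (kbar P1 P2) (Aclu P1 P2) (zmon P1 P2 j).
Proof. exact: main. Qed.
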